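(* Let $G$ be a finitely generated group with a left-invariant total order $\prec$, and let $Z$ be a finitely generated central subgroup of $G$ which is cofinal for $\prec$. Then $P_\prec=\{g\in G\mid 1\prec g\}$ is coarsely connected.
   Context: A subgroup $Z$ is cofinal for $\prec$ if for every $g\in G$ there exist $h_1,h_2\in Z$ with $h_1\prec g\prec h_2$. Coarse connectedness is with respect to the word metric $d_X$ of a finite generating set $X$: a subset $S$ is coarsely connected if there is $r\ge1$ such that any two elements of $S$ are joined by a sequence $s_0,\dots,s_n$ in $S$ with $d_X(s_i,s_{i+1})\le r$. *)

(* Defs.v *)
From Stdlib Require Import List Relations.
Import ListNotations.
Set Implicit Arguments.

Section GroupDefs.
Variable G : Type.
Variables (mul : G -> G -> G) (e : G) (inv : G -> G).

Definition is_group : Prop :=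
  (forall x y z, mul x (mul y z) = mul (mul x y) z) /\
  (forall x, mul e x = x) /\ (forall x, mul x e = x) /\
  (forall x, mul (inv x) x = e) /\ (forall x, mul x (inv x) = e).

Definition word_prod (w : list G) : G := fold_right mul e w.

Definition letter (X : list G) (a : G) : Prop := In a X \/ In (inv a) X.

Definition gen_by (X : list G) (g : G) : Prop :=
  exists w : list G, Forall (letter X) w /\ g = word_prod w.

Definition generates (X : list G) : Prop := forall g, gen_by X g.

Definition fin_generated : Prop := exists X : list G, generates X.

Definition dist_le (X : list G) (g h : G) (r : nat) : Prop :=
  exists w : list G, Forall (letter X) w /\ length w <= r /\ mul g (word_prod w) = h.

Definition left_inv_total_order (lt : G -> G -> Prop) : Prop :=
  (forall x, ~ lt x x) /\
  (forall x y z, lt x y -> lt y z -> lt x z) /\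
  (forall x y, x = y \/ lt x y \/ lt y x) /\
  (forall g x y, lt x y -> lt (mul g x) (mul g y)).

Definition is_subgroup (Z : G -> Prop) : Prop :=
  Z e /\ (forall x y, Z x -> Z y -> Z (mul x y)) /\ (forall x, Z x -> Z (inv x)).

Definition central (Z : G -> Prop) : Prop :=
  forall z g, Z z -> mul z g = mul g z.

Definition fg_subgroup (Z : G -> Prop) : Prop :=
  exists Y : list G, (forall y, In y Y -> Z y) /\ (forall z, Z z <-> gen_by Y z).

Definition cofinal (lt : G -> G -> Prop) (Z : G -> Prop) : Prop :=
  forall g, exists h1 h2, Z h1 /\ Z h2 /\ lt h1 g /\ lt g h2.

Definition coarsely_connected (X : list G) (S : G -> Prop) : Prop :=
  exists r : nat, 1 <= r /\
    forall s t, S s -> S t ->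
      clos_refl_trans G (fun a b => S a /\ S b /\ dist_le X a b r) s t.

Definition positive_cone (lt : G -> G -> Prop) : G -> Prop := fun g => lt e g.

End GroupDefs.

(* Main.v *)
Require Import Defs.
From Stdlib Require Import List Relations Lia Arith.
Import ListNotations.

Theorem lemma4p14 (G : Type) (mul : G -> G -> G) (e : G) (inv : G -> G)
  (lt : G -> G -> Prop) (Z : G -> Prop) :
  is_group mul e inv ->
  fin_generated mul e inv ->
  left_inv_total_order mul lt ->
  is_subgroup mul e inv Z ->
  central mul Z ->
  fg_subgroup mul e inv Z ->
  cofinal lt Z ->
  forall X : list G, generates mul e inv X ->
    coarsely_connected mul e inv X (positive_cone e lt).
Proof.
  intros HG _ HO HZ Hc Hfg Hcof X HX.
  destruct HG as (assoc & idl & idr & invl & invr).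
  destruct HO as (irr & trans & tri & linv).
  destruct HZ as (Ze & Zmul & Zinv).
  destruct Hfg as (Y & HYZ & HZY).
  unfold generates, gen_by, dist_le, letter, word_prod, positive_cone in *.
  assert (invinv : forall x, inv (inv x) = x).
  { intro x. rewrite <- (idr (inv (inv x))), <- (invl x), assoc, invl, idl. reflexivity. }
  pose (le := fun a b => a = b \/ lt a b).
  assert (lelinv : forall g a b, le a b -> le (mul g a) (mul g b)).
  { intros g a b [->|H]; [left; reflexivity|right; auto]. }
  assert (letr : forall a b c, le a b -> le b c -> le a c).
  { intros a b c [->|H1] [->|H2]; unfold le; eauto. }
  assert (ltle : forall a b c, lt a b -> le b c -> lt a c).
  { intros a b c H1 [->|H2]; eauto. }
  assert (Hmax : forall l : list G, exists m, (m = e \/ In m l) /\ forall a, In a l -> le a m).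
  { induction l as [|a l IH].
    - exists e. split; [left; reflexivity| intros a []].
    - destruct IH as (m & H1 & H2).
      destruct (tri a m) as [<-|[H|H]].
      + exists a. split; [right; left; reflexivity|].
        intros b [<-|Hb]; [left; reflexivity|auto].
      + exists m. split; [destruct H1; [left|right; right]; auto|].
        intros b [<-|Hb]; [right; auto|auto].
      + exists a. split; [right; left; reflexivity|].
        intros b [<-|Hb]; [left; reflexivity|].
        eapply letr; [apply H2; auto| right; auto]. }
  destruct (Hmax (Y ++ map inv Y)) as (m & Hm1 & Hm2).
  assert (Zm : Z m).
  { destruct Hm1 as [->|Hm1]; auto.
    destruct (in_app_or _ _ _ Hm1) as [H|H]; auto.
    apply in_map_iff in H. destruct H as (y & <- & Hy). auto. }
  assert (Hlet : forall a, In a Y \/ In (inv a) Y -> Z a /\ le a m).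
  { intros a [H|H].
    - split; auto. apply Hm2. apply in_or_app. left; auto.
    - split. rewrite <- (invinv a). auto.
      apply Hm2. apply in_or_app. right. apply in_map_iff. exists (inv a). auto. }
  pose (pow := fun n => Nat.iter n (mul m) e).
  assert (powS : forall n, pow (S n) = mul m (pow n)) by reflexivity.
  assert (pow0 : pow 0 = e) by reflexivity.
  clearbody pow.
  assert (Zpow : forall n, Z (pow n)).
  { induction n; [rewrite pow0|rewrite powS]; auto. }
  assert (powc : forall n g, mul (pow n) g = mul g (pow n)) by (intros; apply Hc; auto).
  assert (bound : forall w, Forall (fun a => In a Y \/ In (inv a) Y) w ->
             le (fold_right mul e w) (pow (length w))).
  { induction w as [|a w IH]; intros Hw; simpl.
    - rewrite pow0. left; reflexivity.
    - inversion Hw; subst. destruct (Hlet a H1) as [Za Ham].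
      rewrite powS. eapply letr. apply lelinv. apply IH; auto.
      rewrite (Hc a (pow (length w)) Za).
      rewrite (Hc m (pow (length w)) Zm). apply lelinv. auto. }
  assert (mpos : lt e m).
  { destruct (Hcof e) as (h1 & h2 & _ & Zh2 & _ & Hh2).
    apply HZY in Zh2. destruct Zh2 as (w & Hw & ->).
    pose proof (bound w Hw) as Hb.
    assert (Hme : le m e -> forall k, le (pow k) e).
    { intros Hme k. induction k. rewrite pow0; left; reflexivity.
      rewrite powS. eapply letr. apply (lelinv m _ _ IHk). rewrite idr. auto. }
    destruct (tri e m) as [<-|[H|H]]; auto.
    - exfalso. apply (irr e). eapply ltle. eapply ltle. apply Hh2. apply Hb.
      apply Hme. left; reflexivity.
    - exfalso. apply (irr e). eapply ltle. eapply ltle. apply Hh2. apply Hb.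
      apply Hme. right; auto. }
  assert (posm : forall y, lt e y -> lt e (mul m y)).
  { intros y Hy. rewrite (Hc m y Zm). eapply trans. apply Hy.
    pose proof (linv y e m mpos) as H. rewrite idr in H. auto. }
  assert (powpos : forall j x, lt e x -> lt e (mul (pow j) x)).
  { induction j; intros x Hx. rewrite pow0, idl; auto.
    rewrite powS, <- assoc. auto. }
  assert (posmono : forall j N x, lt e (mul (pow N) x) -> lt e (mul (pow (j+N)) x)).
  { induction j; intros N x H; simpl; auto. rewrite powS, <- assoc. auto. }
  assert (single : forall g, exists N, lt e (mul (pow N) g)).
  { intro g. destruct (Hcof (inv g)) as (h1 & h2 & _ & Zh2 & _ & Hh2).
    apply HZY in Zh2. destruct Zh2 as (w & Hw & ->).
    exists (length w). pose proof (ltle _ _ _ Hh2 (bound w Hw)) as H.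
    apply (linv g) in H. rewrite invr in H. rewrite powc. auto. }
  assert (multi : forall (f : nat -> G) K, exists N, forall n, n <= K -> lt e (mul (pow N) (f n))).
  { intros f K. induction K as [|K IH].
    - destruct (single (f 0)) as [N HN]. exists N. intros n Hn.
      assert (n = 0) by lia. subst; auto.
    - destruct IH as [N1 H1]. destruct (single (f (S K))) as [N2 H2].
      exists (N1 + N2). intros n Hn.
      destruct (Nat.eq_dec n (S K)) as [->|Hne].
      + apply posmono; auto.
      + rewrite Nat.add_comm. apply posmono. apply H1. lia. }
  destruct (HX m) as (wm & Hwm & Hmw).
  pose (r := S (length wm)).
  exists r. split; [unfold r; lia|].
  pose (R := fun a b => lt e a /\ lt e b /\
        (exists w, Forall (fun a => In a X \/ In (inv a) X) w /\ length w <= r /\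
                   mul a (fold_right mul e w) = b)).
  assert (wpapp : forall l1 l2, fold_right mul e (l1 ++ l2) =
                    mul (fold_right mul e l1) (fold_right mul e l2)).
  { induction l1; intros; simpl. rewrite idl; auto. rewrite IHl1, assoc; auto. }
  assert (wpinv : forall w, mul (fold_right mul e w) (fold_right mul e (rev (map inv w))) = e).
  { induction w as [|a w IH]; simpl. apply idl.
    rewrite wpapp. simpl. rewrite idr.
    rewrite <- assoc, (assoc (fold_right mul e w)), IH, idl, invr. reflexivity. }
  assert (Rsym : forall a b, R a b -> R b a).
  { intros a b (Ha & Hb & w & Hw & Hl & Hab). split; [auto|split; [auto|]].
    exists (rev (map inv w)). split; [|split].
    - apply Forall_rev. apply Forall_map. eapply Forall_impl; [|apply Hw].
      intros x [H|H]; [right; rewrite invinv; auto|left; auto].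
    - rewrite length_rev, length_map. auto.
    - rewrite <- Hab, <- assoc, wpinv, idr. reflexivity. }
  assert (crtsym : forall a b, clos_refl_trans G R a b -> clos_refl_trans G R b a).
  { intros a b H. induction H.
    - apply rt_step. auto.
    - apply rt_refl.
    - eapply rt_trans; eauto. }
  assert (stepm : forall y, lt e y -> R y (mul m y)).
  { intros y Hy. split; [auto|split; [auto|]].
    exists wm. split; [auto|split; [unfold r; lia|]].
    rewrite <- Hmw. symmetry. apply Hc; auto. }
  assert (chainm : forall j x, lt e x -> clos_refl_trans G R x (mul (pow j) x)).
  { induction j; intros x Hx.
    - rewrite pow0, idl. apply rt_refl.
    - eapply rt_trans. apply (IHj x Hx).
      rewrite powS, <- assoc. apply rt_step. apply stepm. auto. }
  assert (prefix : forall w c, Forall (fun a => In a X \/ In (inv a) X) w ->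
            (forall n, lt e (mul c (fold_right mul e (firstn n w)))) ->
            clos_refl_trans G R c (mul c (fold_right mul e w))).
  { induction w as [|a w IH]; intros c Hw Hp; simpl.
    - rewrite idr. apply rt_refl.
    - inversion Hw; subst.
      eapply rt_trans with (y := mul c a).
      + apply rt_step. pose proof (Hp 0) as P0. pose proof (Hp 1) as P1.
        simpl in P0, P1. rewrite idr in P0, P1.
        split; [auto|split; [auto|]]. exists [a]. split; [auto|split; [unfold r; simpl; lia|]].
        simpl. rewrite idr. reflexivity.
      + rewrite assoc. apply IH; auto. intro n. rewrite <- assoc. apply (Hp (S n)). }
  assert (tom : forall s, lt e s -> clos_refl_trans G R s m).
  { intros s Hs. destruct (HX s) as (ws & Hws & ->).
    destruct (multi (fun n => fold_right mul e (firstn n ws)) (length ws)) as [N HN].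
    assert (Hall : forall n, lt e (mul (pow N) (fold_right mul e (firstn n ws)))).
    { intro n. destruct (Nat.le_gt_cases n (length ws)) as [H|H]. apply (HN n H).
      rewrite firstn_all2 by lia. pose proof (HN (length ws) (le_n _)) as H'.
      simpl in H'. rewrite firstn_all in H'. auto. }
    destruct N as [|N'].
    - exfalso. pose proof (Hall 0) as H. simpl in H. rewrite pow0, idl in H. apply (irr e H).
    - eapply rt_trans. apply (chainm (S N') _ Hs).
      eapply rt_trans. apply crtsym. apply prefix; auto.
      apply crtsym. rewrite powS. rewrite (Hc m (pow N') Zm). apply chainm. auto. }
  intros s t Hs Ht. change (clos_refl_trans G R s t).
  eapply rt_trans. apply (tom s Hs). apply crtsym. apply (tom t Ht).
Qed.
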